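(* (i) $\simeq$ and $\simeq_\omega$ are congruences on monitors, i.e. equivalence relations preserved by $a.\_$ (for every $a\in\mathit{Act}$) and by $+$. (ii) $\simeq\ \subseteq\ \simeq_\omega$, and the inclusion is strict when $\mathit{Act}$ is finite. (iii) If $\mathit{Act}$ is infinite then $\simeq\ =\ \simeq_\omega$.
   Context: Let $\mathit{Act}$ be a nonempty set of actions, $\tau\notin\mathit{Act}$, and $\mathit{Var}$ a countably infinite set of variables disjoint from $\mathit{Act}\cup\{\tau\}$. Monitors are the terms $m,n ::= v \mid a.m \mid m+n \mid x$ ($a\in\mathit{Act}$, $x\in\mathit{Var}$), with verdicts $v ::= \mathit{end}\mid\mathit{yes}\mid\mathit{no}$; a monitor is closed if it contains no variable; a (closed) substitution maps variables to (closed) monitors, and $\sigma(m)$ denotes its application. Transitions $\xrightarrow{\alpha}$ ($\alpha\in\mathit{Act}\cup\{\tau\}$) are the least relation with $a.m\xrightarrow{a}m$; $m\xrightarrow{\alpha}m'$ implies $m+n\xrightarrow{\alpha}m'$ and $n+m\xrightarrow{\alpha}m'$; and $v\xrightarrow{\alpha}v$ for every verdict $v$. Weak transitions: $m\xRightarrow{\varepsilon}m'$ iff $m(\xrightarrow{\tau})^*m'$; $m\xRightarrow{a}m'$ iff $m\xRightarrow{\varepsilon}\xrightarrow{a}\xRightarrow{\varepsilon}m'$; $m\xRightarrow{as'}m'$ ($s'\ne\varepsilon$) iff $m\xRightarrow{a}m_1\xRightarrow{s'}m'$ for some $m_1$. For closed $m$: $L_a(m)=\{s\in\mathit{Act}^*\mid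 m\xRightarrow{s}\mathit{yes}\}$, $L_r(m)=\{s\in\mathit{Act}^*\mid m\xRightarrow{s}\mathit{no}\}$. For closed $m,n$: $m\simeq n$ (verdict equivalence) iff $L_a(m)=L_a(n)$ and $L_r(m)=L_r(n)$; $m\simeq_\omega n$ ($\omega$-verdict equivalence) iff $L_a(m)\cdot\mathit{Act}^\omega=L_a(n)\cdot\mathit{Act}^\omega$ and $L_r(m)\cdot\mathit{Act}^\omega=L_r(n)\cdot\mathit{Act}^\omega$, where $\mathit{Act}^\omega$ is the set of infinite sequences over $\mathit{Act}$ and $\cdot$ is concatenation. For open monitors, $m\simeq n$ (resp. $m\simeq_\omega n$) iff $\sigma(m)\simeq\sigma(n)$ (resp. $\sigma(m)\simeq_\omega\sigma(n)$) for every closed substitution $\sigma$. *)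

(* Defs.v *)
(* Monitors over an action type Act; variables are nat
   (a countably infinite set); tau is represented by None : option Act. *)
From Stdlib Require Import List Relations.
Import ListNotations.
Set Implicit Arguments.

Section Monitors.
Variable Act : Type.

Inductive verdict : Type := vend | vyes | vno.

Inductive monitor : Type :=
| MVerd : verdict -> monitor
| MPre  : Act -> monitor -> monitor
| MSum  : monitor -> monitor -> monitor
| MVar  : nat -> monitor.

Fixpoint closed (m : monitor) : Prop :=
  match m with
  | MVerd _ => True
  | MPre _ m => closed m
  | MSum m n => closed m /\ closed n
  | MVar _ => False
  end.

Definition closed_subst (sigma : nat -> monitor) : Prop :=
  forall x, closed (sigma x).

Fixpoint subst (sigma : nat -> monitor) (m : monitor) : monitor :=
  match m with
  | MVerd v => MVerd v
  | MPre a m => MPre a (subst sigma m)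
  | MSum m n => MSum (subst sigma m) (subst sigma n)
  | MVar x => sigma x
  end.

Inductive step : option Act -> monitor -> monitor -> Prop :=
| st_pre : forall a m, step (Some a) (MPre a m) m
| st_suml : forall al m n m', step al m m' -> step al (MSum m n) m'
| st_sumr : forall al m n m', step al m m' -> step al (MSum n m) m'
| st_verd : forall al v, step al (MVerd v) (MVerd v).

Definition weak_eps : monitor -> monitor -> Prop :=
  clos_refl_trans monitor (step None).

Definition weak_act (a : Act) (m m' : monitor) : Prop :=
  exists m1 m2, weak_eps m m1 /\ step (Some a) m1 m2 /\ weak_eps m2 m'.

Fixpoint weak (s : list Act) (m m' : monitor) : Prop :=
  match s with
  | [] => weak_eps m m'
  | a :: s' =>
      match s' with
      | [] => weak_act a m m'
      | _ :: _ => exists m1, weak_act a m m1 /\ weak s' m1 m'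
      end
  end.

Definition La (m : monitor) (s : list Act) : Prop := weak s m (MVerd vyes).
Definition Lr (m : monitor) (s : list Act) : Prop := weak s m (MVerd vno).

(* L . Act^omega, infinite sequences being functions nat -> Act *)
Definition omega_ext (L : list Act -> Prop) (w : nat -> Act) : Prop :=
  exists s, L s /\ forall i (d : Act), i < length s -> w i = nth i s d.

Definition cverd_eq (m n : monitor) : Prop :=
  (forall s, La m s <-> La n s) /\ (forall s, Lr m s <-> Lr n s).

Definition cverd_eq_omega (m n : monitor) : Prop :=
  (forall w, omega_ext (La m) w <-> omega_ext (La n) w) /\
  (forall w, omega_ext (Lr m) w <-> omega_ext (Lr n) w).

(* extension to open monitors via closed substitutions
   (coincides with the closed versions on closed monitors) *)
Definition verd_eq (m n : monitor) : Prop :=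
  forall sigma, closed_subst sigma -> cverd_eq (subst sigma m) (subst sigma n).

Definition verd_eq_omega (m n : monitor) : Prop :=
  forall sigma, closed_subst sigma ->
    cverd_eq_omega (subst sigma m) (subst sigma n).

Definition congruence (R : monitor -> monitor -> Prop) : Prop :=
  equivalence monitor R /\
  (forall a m n, R m n -> R (MPre a m) (MPre a n)) /\
  (forall m m' n n', R m n -> R m' n' -> R (MSum m m') (MSum n n')).

Definition finite_type : Prop := exists l : list Act, forall a, In a l.

End Monitors.

(* Main.v *)
Require Import Defs.
From Stdlib Require Import List Relations Classical Lia.
Import ListNotations.

Section H.
Variable A : Type.
Local Notation M := (monitor A).
Local Notation V v := (MVerd A v).

Fixpoint wk (s : list A) (m m' : M) : Prop :=
  match s with
  | [] => weak_eps m m'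
  | a :: s' => exists m1, weak_act a m m1 /\ wk s' m1 m'
  end.

Lemma eps_refl (m : M) : weak_eps m m.
Proof. apply rt_refl. Qed.
Lemma eps_trans (m p q : M) : weak_eps m p -> weak_eps p q -> weak_eps m q.
Proof. intros; eapply rt_trans; eauto. Qed.
Lemma eps_step (m p : M) : step None m p -> weak_eps m p.
Proof. intros; apply rt_step; auto. Qed.

Lemma act_eps a (m p q : M) : weak_act a m p -> weak_eps p q -> weak_act a m q.
Proof. intros (m1 & m2 & H1 & H2 & H3) H4. exists m1, m2; repeat split; auto.
  eapply eps_trans; eauto. Qed.

Lemma weak_wk s (m m' : M) : weak s m m' <-> wk s m m'.
Proof.
  revert m. induction s as [|a s IH]; intro m; [simpl; tauto|].
  destruct s as [|b s].
  - simpl. split.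
    + intro H; exists m'; split; auto; apply eps_refl.
    + intros (m1 & H1 & H2); eapply act_eps; eauto.
  - change (weak (a :: b :: s) m m') with (exists m1, weak_act a m m1 /\ weak (b::s) m1 m').
    change (wk (a :: b :: s) m m') with (exists m1, weak_act a m m1 /\ wk (b::s) m1 m').
    split; intros (m1 & H1 & H2); exists m1; split; auto; apply IH; auto.
Qed.

Lemma step_verd al v (q : M) : step al (V v) q -> q = V v.
Proof. intro H; inversion H; auto. Qed.

Lemma eps_rt1n (m q : M) : weak_eps m q <-> clos_refl_trans_1n M (step None) m q.
Proof. apply clos_rt_rt1n_iff. Qed.

Lemma eps_verd v (q : M) : weak_eps (V v) q -> q = V v.
Proof. intro H; apply eps_rt1n in H. remember (V v) as x. induction H; subst; auto.
  apply step_verd in H; subst; auto. Qed.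

Lemma wk_verd s v (q : M) : wk s (V v) q -> q = V v.
Proof. revert q; induction s; simpl; intros q H.
  - apply eps_verd; auto.
  - destruct H as (m1 & (x & y & H1 & H2 & H3) & H4).
    apply eps_verd in H1; subst. apply step_verd in H2; subst.
    apply eps_verd in H3; subst. auto. Qed.

Lemma act_verd a v : weak_act a (V v) (V v).
Proof. exists (V v), (V v); repeat split; try apply eps_refl; constructor. Qed.

Lemma wk_verd_all s v : wk s (V v) (V v).
Proof. induction s; simpl. apply eps_refl. exists (V v); split; auto; apply act_verd. Qed.

Lemma wk_ext s t (m : M) v : wk s m (V v) -> wk (s ++ t) m (V v).
Proof. revert m; induction s as [|a s IH]; simpl; intros m H.
  - destruct t as [|b t]; simpl; auto. exists (V v); split.
    + exists (V v), (V v); repeat split; auto; [constructor| apply eps_refl].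
    + apply wk_verd_all.
  - destruct H as (m1 & H1 & H2); exists m1; split; auto. Qed.

Lemma eps_pre a (m q : M) : weak_eps (MPre a m) q -> q = MPre a m.
Proof. intro H; apply eps_rt1n in H. inversion H; subst; auto. inversion H0. Qed.

Lemma wk_pre s a (m : M) v : wk s (MPre a m) (V v) <-> exists s', s = a :: s' /\ wk s' m (V v).
Proof. destruct s as [|b s]; simpl; split.
  - intro H; apply eps_pre in H; discriminate.
  - intros (s' & H & _); discriminate.
  - intros (m1 & (x & y & H1 & H2 & H3) & H4). apply eps_pre in H1; subst.
    inversion H2; subst. exists s; split; auto.
    destruct s; simpl in *. eapply eps_trans; eauto.
    destruct H4 as (m2 & H5 & H6). exists m2; split; auto.
    destruct H5 as (x1 & y1 & H7 & H8 & H9). exists x1, y1; repeat split; auto.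
    eapply eps_trans; eauto.
  - intros (s' & E & H); injection E; intros; subst.
    exists m; split; auto. exists (MPre a m), m; repeat split; try apply eps_refl; constructor.
Qed.

Lemma eps_sum (m n q : M) : weak_eps (MSum m n) q -> q = MSum m n \/ weak_eps m q \/ weak_eps n q.
Proof. intro H; apply eps_rt1n in H. inversion H; subst; auto.
  right. assert (weak_eps y q) by (apply eps_rt1n; auto).
  inversion H0; subst; [left|right]; (eapply eps_trans; [apply eps_step; eassumption| assumption]). Qed.

Lemma eps_suml (m n q : M) : weak_eps m q -> q = m \/ weak_eps (MSum m n) q.
Proof. intro H; apply eps_rt1n in H. inversion H; subst; auto.
  right. eapply eps_trans. apply eps_step. apply st_suml; eauto. apply eps_rt1n; auto. Qed.
Lemma eps_sumr (m n q : M) : weak_eps n q -> q = n \/ weak_eps (MSum m n) q.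
Proof. intro H; apply eps_rt1n in H. inversion H; subst; auto.
  right. eapply eps_trans. apply eps_step. apply st_sumr; eauto. apply eps_rt1n; auto. Qed.

Lemma act_sum a (m n q : M) : weak_act a (MSum m n) q <-> weak_act a m q \/ weak_act a n q.
Proof. split.
  - intros (x & y & H1 & H2 & H3). apply eps_sum in H1. destruct H1 as [E|[E|E]].
    + subst. inversion H2; subst; [left; exists m, y|right; exists n, y]; repeat split; auto; apply eps_refl.
    + left; exists x, y; auto.
    + right; exists x, y; auto.
  - intros [(x & y & H1 & H2 & H3)|(x & y & H1 & H2 & H3)].
    + destruct (eps_suml m n x H1) as [E|E].
      * subst. exists (MSum m n), y; repeat split; auto. apply eps_refl. constructor; auto.
      * exists x, y; auto.
    + destruct (eps_sumr m n x H1) as [E|E].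
      * subst. exists (MSum m n), y; repeat split; auto. apply eps_refl. apply st_sumr; auto.
      * exists x, y; auto.
Qed.

Lemma wk_sum s (m n : M) v : wk s (MSum m n) (V v) <-> wk s m (V v) \/ wk s n (V v).
Proof. destruct s as [|b s]; simpl; split.
  - intro H; apply eps_sum in H. destruct H as [E|[E|E]]; auto; discriminate.
  - intros [H|H].
    + destruct (eps_suml m n _ H) as [E|E]; auto. subst.
      apply eps_step; constructor; constructor.
    + destruct (eps_sumr m n _ H) as [E|E]; auto. subst.
      apply eps_step; apply st_sumr; constructor.
  - intros (m1 & H1 & H2). apply act_sum in H1. destruct H1; [left|right]; exists m1; auto.
  - intros [(m1 & H1 & H2)|(m1 & H1 & H2)]; exists m1; split; auto; apply act_sum; auto.
Qed.

Fixpoint acts (m : M) : list A :=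
  match m with
  | MVerd _ _ => []
  | MPre a m => a :: acts m
  | MSum m n => acts m ++ acts n
  | MVar _ _ => []
  end.

Lemma step_acts al (m q : M) : step al m q -> incl (acts q) (acts m).
Proof. induction 1; simpl; intros x Hx; auto; try (apply in_or_app; auto); simpl; auto. Qed.

Lemma eps_acts (m q : M) : weak_eps m q -> incl (acts q) (acts m).
Proof. induction 1. eapply step_acts; eauto. intros ? ?; auto. intros ? ?; auto. Qed.

Lemma act_acts a (m q : M) : weak_act a m q -> incl (acts q) (acts m).
Proof. intros (x & y & H1 & H2 & H3) z Hz.
  apply (eps_acts _ _ H1), (step_acts _ _ _ H2), (eps_acts _ _ H3); auto. Qed.

Lemma step_fresh a (p q : M) : step (Some a) p q -> ~ In a (acts p) ->
  exists v, q = V v /\ step None p q.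
Proof. intro H. remember (Some a) as al. induction H; intro Hn; subst.
  - injection Heqal; intros; subst. simpl in Hn; tauto.
  - destruct IHstep as (v & E & S); auto. intro; apply Hn; simpl; apply in_or_app; auto.
    exists v; split; auto; constructor; auto.
  - destruct IHstep as (v & E & S); auto. intro; apply Hn; simpl; apply in_or_app; auto.
    exists v; split; auto; apply st_sumr; auto.
  - exists v; split; auto; constructor.
Qed.

Lemma wk_fresh s a u (n : M) v : ~ In a (acts n) -> wk (s ++ a :: u) n (V v) -> wk s n (V v).
Proof. revert n; induction s as [|b s IH]; simpl; intros n Hn H.
  - destruct H as (m1 & (x & y & H1 & H2 & H3) & H4).
    destruct (step_fresh a x y H2) as (v' & E & S).
    { intro Hx; apply Hn, (eps_acts _ _ H1); auto. }
    subst. apply eps_verd in H3; subst. apply wk_verd in H4. injection H4; intro; subst.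
    eapply eps_trans; eauto. apply eps_step; auto.
  - destruct H as (m1 & H1 & H2). exists m1; split; auto. apply IH; auto.
    intro Hx; apply Hn, (act_acts _ _ _ H1); auto.
Qed.

Lemma prefix_cases (a : A) (s t : list A) :
  (forall i, i < length t -> nth i s a = nth i t a) ->
  (exists r, s = t ++ r) \/ (exists u, t = s ++ a :: u).
Proof. revert s; induction t as [|b t IH]; intros s H.
  - left; exists s; auto.
  - destruct s as [|c s].
    + right; exists t. specialize (H 0). simpl in H. rewrite H; auto. simpl; lia.
    + assert (c = b) by (apply (H 0); simpl; lia). subst.
      destruct (IH s) as [(r & E)|(u & E)].
      { intros i Hi. apply (H (S i)); simpl; lia. }
      * left; exists r; simpl; rewrite E; auto.
      * right; exists u; simpl; rewrite E; auto.
Qed.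

Lemma omega_incl (v : verdict) (m n : M) :
  (exists a, ~ In a (acts n)) ->
  (forall w, omega_ext (fun s => wk s m (V v)) w -> omega_ext (fun s => wk s n (V v)) w) ->
  forall s, wk s m (V v) -> wk s n (V v).
Proof. intros (a & Ha) H s Hs.
  destruct (H (fun i => nth i s a)) as (t & Ht & Hw).
  { exists s; split; auto. intros i d Hi; apply nth_indep; auto. }
  destruct (prefix_cases a s t) as [(r & E)|(u & E)].
  { intros i Hi; rewrite (Hw i a Hi); auto. }
  - subst; apply wk_ext; auto.
  - subst; eapply wk_fresh; eauto.
Qed.

Lemma omega_ext_iff (L1 L2 : list A -> Prop) w :
  (forall s, L1 s <-> L2 s) -> (omega_ext L1 w <-> omega_ext L2 w).
Proof. intro H; unfold omega_ext; split; intros (s & H1 & H2); exists s; split; auto; apply H; auto. Qed.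

Lemma omega_sum (L1 L2 : list A -> Prop) w :
  omega_ext (fun s => L1 s \/ L2 s) w <-> omega_ext L1 w \/ omega_ext L2 w.
Proof. unfold omega_ext; split.
  - intros (s & [H|H] & H2); [left|right]; exists s; auto.
  - intros [(s & H1 & H2)|(s & H1 & H2)]; exists s; auto.
Qed.

Lemma omega_pre (L : list A -> Prop) a w :
  omega_ext (fun s => exists s', s = a :: s' /\ L s') w <->
  w 0 = a /\ omega_ext L (fun i => w (S i)).
Proof. unfold omega_ext; split.
  - intros (s & (s' & E & H1) & H2); subst. split.
    + apply (H2 0 a); simpl; lia.
    + exists s'; split; auto. intros i d Hi. apply (H2 (S i) d); simpl; lia.
  - intros (E & s & H1 & H2). exists (a :: s); split; eauto.
    intros [|i] d Hi; simpl; auto. apply H2; simpl in Hi; lia.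
Qed.

Lemma La_wk (m : M) s : La m s <-> wk s m (V vyes).
Proof. apply weak_wk. Qed.
Lemma Lr_wk (m : M) s : Lr m s <-> wk s m (V vno).
Proof. apply weak_wk. Qed.

Lemma subst_closed sigma (m : M) : closed m -> subst sigma m = m.
Proof. induction m; simpl; intros; auto; try tauto.
  f_equal; auto. destruct H; f_equal; auto. Qed.

Lemma La_pre a (m : M) s : La (MPre a m) s <-> exists s', s = a :: s' /\ La m s'.
Proof. rewrite La_wk, wk_pre. split; intros (s' & E & H); exists s'; split; auto; apply La_wk; auto. Qed.
Lemma Lr_pre a (m : M) s : Lr (MPre a m) s <-> exists s', s = a :: s' /\ Lr m s'.
Proof. rewrite Lr_wk, wk_pre. split; intros (s' & E & H); exists s'; split; auto; apply Lr_wk; auto. Qed.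
Lemma La_sum (m n : M) s : La (MSum m n) s <-> La m s \/ La n s.
Proof. rewrite !La_wk; apply wk_sum. Qed.
Lemma Lr_sum (m n : M) s : Lr (MSum m n) s <-> Lr m s \/ Lr n s.
Proof. rewrite !Lr_wk; apply wk_sum. Qed.

Lemma cong1 : congruence (@verd_eq A).
Proof. split; [split|split].
  - intros m sigma Hs; split; intro; tauto.
  - intros m n p H1 H2 sigma Hs; destruct (H1 sigma Hs), (H2 sigma Hs); split; intro s;
    [rewrite H, H3|rewrite H0, H4]; tauto.
  - intros m n H sigma Hs; destruct (H sigma Hs); split; intro s; [rewrite H0|rewrite H1]; tauto.
  - intros a m n H sigma Hs; destruct (H sigma Hs) as [H1 H2]; simpl; split; intro s;
    rewrite ?La_pre, ?Lr_pre; split; intros (s' & E & Hs'); exists s'; split; auto;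
    try apply H1; try apply H2; auto.
  - intros m m' n n' H H' sigma Hs; destruct (H sigma Hs) as [H1 H2];
    destruct (H' sigma Hs) as [H3 H4]; simpl; split; intro s;
    rewrite ?La_sum, ?Lr_sum; rewrite ?H1, ?H2, ?H3, ?H4; tauto.
Qed.

Lemma cong2 : congruence (@verd_eq_omega A).
Proof. split; [split|split].
  - intros m sigma Hs; split; intro; tauto.
  - intros m n p H1 H2 sigma Hs; destruct (H1 sigma Hs), (H2 sigma Hs); split; intro s;
    [rewrite H, H3|rewrite H0, H4]; tauto.
  - intros m n H sigma Hs; destruct (H sigma Hs); split; intro s; [rewrite H0|rewrite H1]; tauto.
  - intros a m n H sigma Hs; destruct (H sigma Hs) as [H1 H2]; simpl; split; intro w.
    + rewrite (omega_ext_iff _ _ w (La_pre a (subst sigma m))),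
              (omega_ext_iff _ _ w (La_pre a (subst sigma n))), !omega_pre, H1; tauto.
    + rewrite (omega_ext_iff _ _ w (Lr_pre a (subst sigma m))),
              (omega_ext_iff _ _ w (Lr_pre a (subst sigma n))), !omega_pre, H2; tauto.
  - intros m m' n n' H H' sigma Hs; destruct (H sigma Hs) as [H1 H2];
    destruct (H' sigma Hs) as [H3 H4]; simpl; split; intro w.
    + rewrite (omega_ext_iff _ _ w (La_sum (subst sigma m) (subst sigma m'))),
              (omega_ext_iff _ _ w (La_sum (subst sigma n) (subst sigma n'))), !omega_sum, H1, H3; tauto.
    + rewrite (omega_ext_iff _ _ w (Lr_sum (subst sigma m) (subst sigma m'))),
              (omega_ext_iff _ _ w (Lr_sum (subst sigma n) (subst sigma n'))), !omega_sum, H2, H4; tauto.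
Qed.

Lemma incl_eq (m n : M) : verd_eq m n -> verd_eq_omega m n.
Proof. intros H sigma Hs; destruct (H sigma Hs) as [H1 H2]; split; intro w;
  apply omega_ext_iff; auto. Qed.

Lemma inf_eq (m n : M) : ~ finite_type A -> verd_eq_omega m n -> verd_eq m n.
Proof. intros Hinf H sigma Hs; destruct (H sigma Hs) as [H1 H2].
  assert (F : forall k : M, exists a, ~ In a (acts k)).
  { intro k. apply not_all_not_ex. intro C. apply Hinf. exists (acts k).
    intro a. apply NNPP, C. }
  split; intro s; split; intro Hx.
  - apply La_wk; apply La_wk in Hx. revert s Hx. apply omega_incl; auto.
    intros w Hw. apply (omega_ext_iff _ _ w (La_wk _)), H1, (omega_ext_iff _ _ w (La_wk _)); auto.
  - apply La_wk; apply La_wk in Hx. revert s Hx. apply omega_incl; auto.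
    intros w Hw. apply (omega_ext_iff _ _ w (La_wk _)), H1, (omega_ext_iff _ _ w (La_wk _)); auto.
  - apply Lr_wk; apply Lr_wk in Hx. revert s Hx. apply omega_incl; auto.
    intros w Hw. apply (omega_ext_iff _ _ w (Lr_wk _)), H2, (omega_ext_iff _ _ w (Lr_wk _)); auto.
  - apply Lr_wk; apply Lr_wk in Hx. revert s Hx. apply omega_incl; auto.
    intros w Hw. apply (omega_ext_iff _ _ w (Lr_wk _)), H2, (omega_ext_iff _ _ w (Lr_wk _)); auto.
Qed.

Section Fin.
Variable a0 : A.
Fixpoint bigm (l : list A) : M :=
  match l with
  | [] => MPre a0 (V vyes)
  | a :: l => MSum (MPre a (V vyes)) (bigm l)
  end.

Lemma bigm_closed l : closed (bigm l).
Proof. induction l; simpl; auto. Qed.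

Lemma bigm_F1 l : ~ La (bigm l) [].
Proof. induction l; simpl.
  - rewrite La_pre; intros (? & E & _); discriminate.
  - rewrite La_sum, La_pre; intros [H|H]; auto. destruct H as (? & E & _); discriminate.
Qed.

Lemma bigm_F2 l b s : In b (a0 :: l) -> La (bigm l) (b :: s).
Proof. induction l; simpl; intros Hb; rewrite ?La_sum, ?La_pre.
  - destruct Hb as [E|[]]; subst. exists s; split; auto. apply La_wk, wk_verd_all.
  - destruct Hb as [E|[E|Hb]].
    + right; apply IHl; simpl; auto.
    + left; subst; exists s; split; auto; apply La_wk, wk_verd_all.
    + right; apply IHl; simpl; auto.
Qed.

Lemma bigm_F3 l s : ~ Lr (bigm l) s.
Proof. induction l; simpl; rewrite ?Lr_sum, ?Lr_pre.
  - intros (s' & _ & H). apply Lr_wk, wk_verd in H; discriminate.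
  - intros [H|H]; auto. 
    destruct H as (s' & _ & H). apply Lr_wk, wk_verd in H; discriminate.
Qed.
End Fin.
End H.

Theorem mainTheorem2 (Act : Type) (HAct : inhabited Act) :
  (* (i) *)
  (congruence (@verd_eq Act) /\ congruence (@verd_eq_omega Act)) /\
  (* (ii) *)
  ((forall m n : monitor Act, verd_eq m n -> verd_eq_omega m n) /\
   (finite_type Act ->
      exists m n : monitor Act, verd_eq_omega m n /\ ~ verd_eq m n)) /\
  (* (iii) *)
  (~ finite_type Act ->
     forall m n : monitor Act, verd_eq m n <-> verd_eq_omega m n).
Proof.
  split; [split; [apply cong1|apply cong2]|split; [split|]].
  - apply incl_eq.
  - intros (l & Hl). destruct HAct as [a0].
    exists (bigm _ a0 l), (MVerd Act vyes). split.
    + intros sigma Hs. rewrite (subst_closed _ _ _ (bigm_closed _ a0 l)). cbn [subst]. split; intro w.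
      * split; intros _.
        -- exists []; split. apply La_wk, wk_verd_all. simpl; intros; lia.
        -- exists [w 0]; split. apply bigm_F2; simpl; auto.
           intros [|i] d Hi; simpl in *; auto; lia.
      * split; intros (s & H & _).
        -- exfalso; eapply bigm_F3; eauto.
        -- apply Lr_wk, wk_verd in H; discriminate.
    + intro H. destruct (H (fun _ => MVerd Act vyes)) as [H1 _].
      { intro; simpl; auto. }
      rewrite (subst_closed _ _ _ (bigm_closed _ a0 l)) in H1. cbn [subst] in H1.
      apply (bigm_F1 _ a0 l), H1, La_wk, wk_verd_all.
  - intros Hinf m n; split; [apply incl_eq|apply inf_eq; auto].
Qed.
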